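(* Let $K_{\alpha\beta}$ be a second order Killing tensor on an arbitrary Riemannian manifold $(M,g)$. Then the third of the Nijenhuis integrability conditions, $$0=N^{\delta}{}_{[\beta\gamma}K_{\alpha]\varepsilon}K^{\varepsilon}{}_{\delta},$$ is redundant, i.e.\ it is implied by the Killing equation together with the first two Nijenhuis conditions $$0=N^{\delta}{}_{[\beta\gamma}g_{\alpha]\delta},\qquad 0=N^{\delta}{}_{[\beta\gamma}K_{\alpha]\delta}.$$ The same holds true on a pseudo-Riemannian manifold.
   Context: A second order Killing tensor is a symmetric tensor field $K_{\alpha\beta}$ satisfying the Killing equation $\nabla_\alpha K_{\beta\gamma}+\nabla_\beta K_{\gamma\alpha}+\nabla_\gamma K_{\alpha\beta}=0$. It is regarded as an endomorphism field $K^{\alpha}{}_{\beta}$ via the metric $g$. Its Nijenhuis torsion is $N(X,Y)=K^2[X,Y]-K[KX,Y]-K[X,KY]+[KX,KY]$, given in local coordinates by $N^{\alpha}{}_{\beta\gamma}=K^{\alpha}{}_{\delta}K^{\delta}{}_{[\beta;\gamma]}+K^{\delta}{}_{[\beta}K^{\alpha}{}_{\gamma];\delta}$, where a semicolon denotes a covariant derivative and square brackets denote antisymmetrisation. The Nijenhuis integrability conditions are the three equations $0=N^{\delta}{}_{[\beta\gamma}g_{\alpha]\delta}$, $0=N^{\delta}{}_{[\beta\gamma}K_{\alpha]\delta}$, $0=N^{\delta}{}_{[\beta\gamma}K_{\alpha]\varepsilon}K^{\varepsilon}{}_{\delta}$; for an endomorphism with simple eigenvalues they are equivalent to integrability (the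 orthogonal complements of each eigenvector field form integrable distributions). The theorem does not assume that the eigenvalues of $K$ are simple. *)

(* Defs.v *)
(* R : realType, local chart U ⊆ R^n (points 'rV[R]_n). *)
From HB Require Import structures.
From mathcomp Require Import all_boot all_order all_algebra.
From mathcomp Require Import all_classical all_reals all_analysis.
Set Implicit Arguments. Unset Strict Implicit. Unset Printing Implicit Defensive.
Import Order.TTheory GRing.Theory Num.Theory.
Import numFieldNormedType.Exports.
Local Open Scope classical_set_scope.
Local Open Scope ring_scope.

Section Killing.
Variables (R : realType) (n : nat).
Notation pt := 'rV[R]_n.

Definition ebasis (i : 'I_n) : pt := delta_mx 0 i.

Definition partial (f : pt -> R) (i : 'I_n) (x : pt) : R := derive f x (ebasis i).

Fixpoint ipartial (ds : seq 'I_n) (f : pt -> R) : pt -> R :=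
  match ds with
  | [::] => f
  | i :: ds' => partial (ipartial ds' f) i
  end.

Definition smooth_on (U : set pt) (f : pt -> R) : Prop :=
  forall (ds : seq 'I_n) (x : pt), U x -> differentiable (ipartial ds f) x.

Definition gmx (g : pt -> 'I_n -> 'I_n -> R) (x : pt) : 'M[R]_n :=
  \matrix_(i, j) g x i j.

Definition ginv (g : pt -> 'I_n -> 'I_n -> R) (x : pt) (i j : 'I_n) : R :=
  invmx (gmx g x) i j.

Definition christoffel (g : pt -> 'I_n -> 'I_n -> R) (x : pt) (k i j : 'I_n) : R :=
  2^-1 * \sum_(l < n) ginv g x k l *
    (partial (fun y => g y l i) j x + partial (fun y => g y l j) i x
     - partial (fun y => g y i j) l x).

(* covK g K x a b c = K_{ab;c} = nabla_c K_{ab} *)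
Definition covK (g K : pt -> 'I_n -> 'I_n -> R) (x : pt) (a b c : 'I_n) : R :=
  partial (fun y => K y a b) c x
  - \sum_(d < n) (christoffel g x d c a * K x d b + christoffel g x d c b * K x a d).

Definition Kup (g K : pt -> 'I_n -> 'I_n -> R) (x : pt) (a b : 'I_n) : R :=
  \sum_(d < n) ginv g x a d * K x d b.

(* K^a_{b;c} = g^{ad} K_{db;c} (the Levi-Civita connection is metric) *)
Definition covKup (g K : pt -> 'I_n -> 'I_n -> R) (x : pt) (a b c : 'I_n) : R :=
  \sum_(d < n) ginv g x a d * covK g K x d b c.

Definition killing_on (U : set pt) (g K : pt -> 'I_n -> 'I_n -> R) : Prop :=
  forall x, U x -> forall a b c : 'I_n,
    covK g K x b c a + covK g K x c a b + covK g K x a b c = 0.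

Definition nijenhuis (g K : pt -> 'I_n -> 'I_n -> R) (x : pt) (a b c : 'I_n) : R :=
  \sum_(d < n) Kup g K x a d * (2^-1 * (covKup g K x d b c - covKup g K x d c b))
  + \sum_(d < n) 2^-1 * (Kup g K x d b * covKup g K x a c d
                         - Kup g K x d c * covKup g K x a b d).

Definition alt3 (T : 'I_n -> 'I_n -> 'I_n -> R) (b c a : 'I_n) : R :=
  6^-1 * (T b c a - T b a c + T c a b - T c b a + T a b c - T a c b).

Definition nij_cond (g K : pt -> 'I_n -> 'I_n -> R) (X : 'I_n -> 'I_n -> R)
    (x : pt) (b c a : 'I_n) : R :=
  alt3 (fun b' c' a' => \sum_(d < n) nijenhuis g K x d b' c' * X a' d) b c a.

Definition Ksq (g K : pt -> 'I_n -> 'I_n -> R) (x : pt) (a d : 'I_n) : R :=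
  \sum_(e < n) K x a e * Kup g K x e d.

End Killing.

(* Main.v *)
From HB Require Import structures.
From mathcomp Require Import all_boot all_order all_algebra.
From mathcomp Require Import all_classical all_reals all_analysis.
From mathcomp Require Import ring lra.
Require Import Defs.
Import numFieldNormedType.Exports.
Local Open Scope classical_set_scope.
Set Implicit Arguments. Unset Strict Implicit. Unset Printing Implicit Defensive.
Import Order.TTheory GRing.Theory Num.Theory.
Local Open Scope ring_scope.

Section Alg.
Variables (R : realType) (n : nat).
Implicit Types (P Q S M : 'M[R]_n) (F : 'I_n -> 'I_n -> 'I_n -> R).

Definition tr3 P Q S F (b c a : 'I_n) : R :=
  \sum_e \sum_f \sum_h P e b * Q f c * S h a * F e f h.

Lemma tr3D P Q S F G b c a :
  tr3 P Q S (fun x y z => F x y z + G x y z) b c a = tr3 P Q S F b c a + tr3 P Q S G b c a.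
Proof. rewrite /tr3 -big_split; apply: eq_bigr => e _; rewrite -big_split; apply: eq_bigr => f _.
rewrite -big_split; apply: eq_bigr => h _; by rewrite mulrDr. Qed.

Lemma tr3N P Q S F b c a :
  tr3 P Q S (fun x y z => - F x y z) b c a = - tr3 P Q S F b c a.
Proof. rewrite /tr3 -sumrN; apply: eq_bigr => e _; rewrite -sumrN; apply: eq_bigr => f _.
rewrite -sumrN; apply: eq_bigr => h _; by rewrite mulrN. Qed.

Lemma tr3Z P Q S k F b c a :
  tr3 P Q S (fun x y z => k * F x y z) b c a = k * tr3 P Q S F b c a.
Proof. rewrite /tr3 mulr_sumr; apply: eq_bigr => e _; rewrite mulr_sumr; apply: eq_bigr => f _.
rewrite mulr_sumr; apply: eq_bigr => h _; by rewrite mulrCA. Qed.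

Lemma tr3_ext P Q S F G b c a : (forall x y z, F x y z = G x y z) ->
  tr3 P Q S F b c a = tr3 P Q S G b c a.
Proof. by move=> FG; rewrite /tr3; do 3! (apply: eq_bigr => ? _); rewrite FG. Qed.

Lemma tr3_0 P Q S F b c a : (forall x y z, F x y z = 0) -> tr3 P Q S F b c a = 0.
Proof. by move=> F0; rewrite /tr3 big1 // => e _; rewrite big1 // => f _; rewrite big1 // => h _; rewrite F0 mulr0. Qed.

Lemma tr3_p132 P Q S F b c a : tr3 P Q S (fun x y z => F x z y) b c a = tr3 P S Q F b a c.
Proof. rewrite /tr3; apply: eq_bigr => e _; rewrite exchange_big /=. apply: eq_bigr => f _; apply: eq_bigr => h _. ring. Qed.

Lemma tr3_p213 P Q S F b c a : tr3 P Q S (fun x y z => F y x z) b c a = tr3 Q P S F c b a.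
Proof. rewrite /tr3 exchange_big; do 3!(apply: eq_bigr => ? _).
ring. Qed.

Lemma tr3_p231 P Q S F b c a : tr3 P Q S (fun x y z => F y z x) b c a = tr3 Q S P F c a b.
Proof. rewrite /tr3 exchange_big; apply: eq_bigr => f _; rewrite exchange_big;
 apply: eq_bigr => h _; apply: eq_bigr => e _ /=. ring. Qed.

Lemma tr3_p312 P Q S F b c a : tr3 P Q S (fun x y z => F z x y) b c a = tr3 S P Q F a b c.
Proof. rewrite /tr3 [RHS]exchange_big; apply: eq_bigr => f _; rewrite [RHS]exchange_big;
 apply: eq_bigr => h _; apply: eq_bigr => e _ /=. ring. Qed.

Lemma tr3_p321 P Q S F b c a : tr3 P Q S (fun x y z => F z y x) b c a = tr3 S Q P F a c b.
Proof. rewrite tr3_p132 tr3_p231. done. Qed.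

Lemma pull3 (G : 'I_n -> 'I_n -> 'I_n -> 'I_n -> R) :
  \sum_e \sum_f \sum_h \sum_i G e f h i = \sum_i \sum_e \sum_f \sum_h G e f h i.
Proof.
transitivity (\sum_e \sum_f \sum_i \sum_h G e f h i).
  by apply: eq_bigr => e _; apply: eq_bigr => f _; rewrite exchange_big.
transitivity (\sum_e \sum_i \sum_f \sum_h G e f h i).
  by apply: eq_bigr => e _; rewrite exchange_big.
by rewrite exchange_big.
Qed.

Lemma prod2 (u v : 'I_n -> R) c0 d0 :
  c0 * (\sum_f u f) * (\sum_h v h) * d0 = \sum_f \sum_h c0 * u f * v h * d0.
Proof.
rewrite [c0 * _]mulr_sumr !mulr_suml; apply: eq_bigr => f _.
rewrite mulr_sumr mulr_suml; apply: eq_bigr => h _ /=; ring.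
Qed.

Lemma tr3_comp P Q S P' Q' S' F b c a :
  tr3 P Q S (fun x y z => tr3 P' Q' S' F x y z) b c a = tr3 (P' *m P) (Q' *m Q) (S' *m S) F b c a.
Proof.
rewrite /tr3.
transitivity (\sum_e \sum_f \sum_h \sum_i \sum_j \sum_k
   (P e b * Q f c * S h a * (P' i e * Q' j f * S' k h * F i j k))).
  do 3!(apply: eq_bigr => ? _); rewrite big_distrr; apply: eq_bigr => ? _ /=;
  rewrite big_distrr; apply: eq_bigr => ? _ /=; rewrite big_distrr //.
rewrite pull3; apply: eq_bigr => i _; rewrite pull3; apply: eq_bigr => j _;
rewrite pull3; apply: eq_bigr => k _.
rewrite !mxE !big_distrl /=; apply: eq_bigr => e _.
rewrite prod2; apply: eq_bigr => f _; apply: eq_bigr => h _; ring.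
Qed.
Lemma cp123 P Q S P' Q' S' F b c a :
  tr3 P Q S (fun x y z => tr3 P' Q' S' F x y z) b c a = tr3 (P' *m P) (Q' *m Q) (S' *m S) F b c a.
Proof. by rewrite  tr3_comp. Qed.

Lemma cp132 P Q S P' Q' S' F b c a :
  tr3 P Q S (fun x y z => tr3 P' Q' S' F x z y) b c a = tr3 (P' *m P) (Q' *m S) (S' *m Q) F b a c.
Proof. by rewrite (@tr3_p132 P Q S (tr3 P' Q' S' F)) tr3_comp. Qed.

Lemma cp213 P Q S P' Q' S' F b c a :
  tr3 P Q S (fun x y z => tr3 P' Q' S' F y x z) b c a = tr3 (P' *m Q) (Q' *m P) (S' *m S) F c b a.
Proof. by rewrite (@tr3_p213 P Q S (tr3 P' Q' S' F)) tr3_comp. Qed.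

Lemma cp231 P Q S P' Q' S' F b c a :
  tr3 P Q S (fun x y z => tr3 P' Q' S' F y z x) b c a = tr3 (P' *m Q) (Q' *m S) (S' *m P) F c a b.
Proof. by rewrite (@tr3_p231 P Q S (tr3 P' Q' S' F)) tr3_comp. Qed.

Lemma cp312 P Q S P' Q' S' F b c a :
  tr3 P Q S (fun x y z => tr3 P' Q' S' F z x y) b c a = tr3 (P' *m S) (Q' *m P) (S' *m Q) F a b c.
Proof. by rewrite (@tr3_p312 P Q S (tr3 P' Q' S' F)) tr3_comp. Qed.

Lemma cp321 P Q S P' Q' S' F b c a :
  tr3 P Q S (fun x y z => tr3 P' Q' S' F z y x) b c a = tr3 (P' *m S) (Q' *m Q) (S' *m P) F a c b.
Proof. by rewrite (@tr3_p321 P Q S (tr3 P' Q' S' F)) tr3_comp. Qed.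


Section Main.
Variables (T : 'I_n -> 'I_n -> 'I_n -> R) (L : 'M[R]_n).
Hypothesis Tsym : forall a b c, T a b c = T b a c.
Hypothesis Tcyc : forall a b c, T a b c + T b c a + T c a b = 0.

Definition Lp k := iter k (fun M => M *m L) 1%:M.

Lemma Lp_mul p q : Lp p *m Lp q = Lp (p + q).
Proof. elim: q => [|q IH]; first by rewrite mulmx1 addn0.
by rewrite addnS /= mulmxA IH. Qed.

Lemma tsym P Q S i j k : tr3 P Q S T i j k = tr3 Q P S T j i k.
Proof. rewrite -(@tr3_p213 P Q S T i j k); apply: tr3_ext => x y z; apply: Tsym. Qed.

Lemma tcyc P Q S i j k : tr3 P Q S T i j k + tr3 Q S P T j k i + tr3 S P Q T k i j = 0.
Proof. rewrite -(@tr3_p231 P Q S T i j k) -(@tr3_p312 P Q S T i j k) -!tr3D; apply: tr3_0 => x y z; apply: Tcyc. Qed.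

Definition Nl a b c := 2^-1 * (tr3 (Lp 1) (Lp 0) (Lp 0) T a b c - tr3 (Lp 1) (Lp 0) (Lp 0) T a c b
   + tr3 (Lp 0) (Lp 0) (Lp 1) T a c b - tr3 (Lp 0) (Lp 0) (Lp 1) T a b c).
Definition Nlf x y z := Nl z x y.
Definition Psi j := tr3 (Lp 0) (Lp 0) (Lp j) Nlf.

Lemma keyE b c a : alt3 (Psi 2) b c a =
  3^-1 * (tr3 (Lp 2) (Lp 0) (Lp 0) (alt3 (Psi 0)) b c a + tr3 (Lp 0) (Lp 2) (Lp 0) (alt3 (Psi 0)) b c a
          + tr3 (Lp 0) (Lp 0) (Lp 2) (alt3 (Psi 0)) b c a)
  - 2/3 * (tr3 (Lp 1) (Lp 1) (Lp 0) (alt3 (Psi 0)) b c a + tr3 (Lp 1) (Lp 0) (Lp 1) (alt3 (Psi 0)) b c a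
          + tr3 (Lp 0) (Lp 1) (Lp 1) (alt3 (Psi 0)) b c a)
  + 2/3 * (tr3 (Lp 1) (Lp 0) (Lp 0) (alt3 (Psi 1)) b c a + tr3 (Lp 0) (Lp 1) (Lp 0) (alt3 (Psi 1)) b c a
          + tr3 (Lp 0) (Lp 0) (Lp 1) (alt3 (Psi 1)) b c a).
Proof.
rewrite /alt3 /Psi /Nlf /Nl.
do 6! rewrite ?tr3Z ?tr3D ?tr3N ?cp123 ?cp132 ?cp213 ?cp231 ?cp312 ?cp321.
rewrite !Lp_mul ?addnS ?addn0.
have := tsym (Lp 0) (Lp 0) (Lp 3) b c a.
have := tcyc (Lp 0) (Lp 0) (Lp 3) b c a.
have := tsym (Lp 0) (Lp 0) (Lp 3) b a c.
have := tcyc (Lp 0) (Lp 0) (Lp 3) b a c.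
have := tsym (Lp 0) (Lp 0) (Lp 3) c b a.
have := tcyc (Lp 0) (Lp 0) (Lp 3) c b a.
have := tsym (Lp 0) (Lp 0) (Lp 3) c a b.
have := tcyc (Lp 0) (Lp 0) (Lp 3) c a b.
have := tsym (Lp 0) (Lp 0) (Lp 3) a b c.
have := tcyc (Lp 0) (Lp 0) (Lp 3) a b c.
have := tsym (Lp 0) (Lp 0) (Lp 3) a c b.
have := tcyc (Lp 0) (Lp 0) (Lp 3) a c b.
have := tsym (Lp 0) (Lp 1) (Lp 2) b c a.
have := tcyc (Lp 0) (Lp 1) (Lp 2) b c a.
have := tsym (Lp 0) (Lp 1) (Lp 2) b a c.
have := tcyc (Lp 0) (Lp 1) (Lp 2) b a c.
have := tsym (Lp 0) (Lp 1) (Lp 2) c b a.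
have := tcyc (Lp 0) (Lp 1) (Lp 2) c b a.
have := tsym (Lp 0) (Lp 1) (Lp 2) c a b.
have := tcyc (Lp 0) (Lp 1) (Lp 2) c a b.
have := tsym (Lp 0) (Lp 1) (Lp 2) a b c.
have := tcyc (Lp 0) (Lp 1) (Lp 2) a b c.
have := tsym (Lp 0) (Lp 1) (Lp 2) a c b.
have := tcyc (Lp 0) (Lp 1) (Lp 2) a c b.
have := tsym (Lp 0) (Lp 2) (Lp 1) b c a.
have := tcyc (Lp 0) (Lp 2) (Lp 1) b c a.
have := tsym (Lp 0) (Lp 2) (Lp 1) b a c.
have := tcyc (Lp 0) (Lp 2) (Lp 1) b a c.
have := tsym (Lp 0) (Lp 2) (Lp 1) c b a.
have := tcyc (Lp 0) (Lp 2) (Lp 1) c b a.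
have := tsym (Lp 0) (Lp 2) (Lp 1) c a b.
have := tcyc (Lp 0) (Lp 2) (Lp 1) c a b.
have := tsym (Lp 0) (Lp 2) (Lp 1) a b c.
have := tcyc (Lp 0) (Lp 2) (Lp 1) a b c.
have := tsym (Lp 0) (Lp 2) (Lp 1) a c b.
have := tcyc (Lp 0) (Lp 2) (Lp 1) a c b.
have := tsym (Lp 0) (Lp 3) (Lp 0) b c a.
have := tcyc (Lp 0) (Lp 3) (Lp 0) b c a.
have := tsym (Lp 0) (Lp 3) (Lp 0) b a c.
have := tcyc (Lp 0) (Lp 3) (Lp 0) b a c.
have := tsym (Lp 0) (Lp 3) (Lp 0) c b a.
have := tcyc (Lp 0) (Lp 3) (Lp 0) c b a.
have := tsym (Lp 0) (Lp 3) (Lp 0) c a b.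
have := tcyc (Lp 0) (Lp 3) (Lp 0) c a b.
have := tsym (Lp 0) (Lp 3) (Lp 0) a b c.
have := tcyc (Lp 0) (Lp 3) (Lp 0) a b c.
have := tsym (Lp 0) (Lp 3) (Lp 0) a c b.
have := tcyc (Lp 0) (Lp 3) (Lp 0) a c b.
have := tsym (Lp 1) (Lp 0) (Lp 2) b c a.
have := tcyc (Lp 1) (Lp 0) (Lp 2) b c a.
have := tsym (Lp 1) (Lp 0) (Lp 2) b a c.
have := tcyc (Lp 1) (Lp 0) (Lp 2) b a c.
have := tsym (Lp 1) (Lp 0) (Lp 2) c b a.
have := tcyc (Lp 1) (Lp 0) (Lp 2) c b a.
have := tsym (Lp 1) (Lp 0) (Lp 2) c a b.
have := tcyc (Lp 1) (Lp 0) (Lp 2) c a b.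
have := tsym (Lp 1) (Lp 0) (Lp 2) a b c.
have := tcyc (Lp 1) (Lp 0) (Lp 2) a b c.
have := tsym (Lp 1) (Lp 0) (Lp 2) a c b.
have := tcyc (Lp 1) (Lp 0) (Lp 2) a c b.
have := tsym (Lp 1) (Lp 1) (Lp 1) b c a.
have := tcyc (Lp 1) (Lp 1) (Lp 1) b c a.
have := tsym (Lp 1) (Lp 1) (Lp 1) b a c.
have := tcyc (Lp 1) (Lp 1) (Lp 1) b a c.
have := tsym (Lp 1) (Lp 1) (Lp 1) c b a.
have := tcyc (Lp 1) (Lp 1) (Lp 1) c b a.
have := tsym (Lp 1) (Lp 1) (Lp 1) c a b.
have := tcyc (Lp 1) (Lp 1) (Lp 1) c a b.
have := tsym (Lp 1) (Lp 1) (Lp 1) a b c.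
have := tcyc (Lp 1) (Lp 1) (Lp 1) a b c.
have := tsym (Lp 1) (Lp 1) (Lp 1) a c b.
have := tcyc (Lp 1) (Lp 1) (Lp 1) a c b.
have := tsym (Lp 1) (Lp 2) (Lp 0) b c a.
have := tcyc (Lp 1) (Lp 2) (Lp 0) b c a.
have := tsym (Lp 1) (Lp 2) (Lp 0) b a c.
have := tcyc (Lp 1) (Lp 2) (Lp 0) b a c.
have := tsym (Lp 1) (Lp 2) (Lp 0) c b a.
have := tcyc (Lp 1) (Lp 2) (Lp 0) c b a.
have := tsym (Lp 1) (Lp 2) (Lp 0) c a b.
have := tcyc (Lp 1) (Lp 2) (Lp 0) c a b.
have := tsym (Lp 1) (Lp 2) (Lp 0) a b c.
have := tcyc (Lp 1) (Lp 2) (Lp 0) a b c.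
have := tsym (Lp 1) (Lp 2) (Lp 0) a c b.
have := tcyc (Lp 1) (Lp 2) (Lp 0) a c b.
have := tsym (Lp 2) (Lp 0) (Lp 1) b c a.
have := tcyc (Lp 2) (Lp 0) (Lp 1) b c a.
have := tsym (Lp 2) (Lp 0) (Lp 1) b a c.
have := tcyc (Lp 2) (Lp 0) (Lp 1) b a c.
have := tsym (Lp 2) (Lp 0) (Lp 1) c b a.
have := tcyc (Lp 2) (Lp 0) (Lp 1) c b a.
have := tsym (Lp 2) (Lp 0) (Lp 1) c a b.
have := tcyc (Lp 2) (Lp 0) (Lp 1) c a b.
have := tsym (Lp 2) (Lp 0) (Lp 1) a b c.
have := tcyc (Lp 2) (Lp 0) (Lp 1) a b c.
have := tsym (Lp 2) (Lp 0) (Lp 1) a c b.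
have := tcyc (Lp 2) (Lp 0) (Lp 1) a c b.
have := tsym (Lp 2) (Lp 1) (Lp 0) b c a.
have := tcyc (Lp 2) (Lp 1) (Lp 0) b c a.
have := tsym (Lp 2) (Lp 1) (Lp 0) b a c.
have := tcyc (Lp 2) (Lp 1) (Lp 0) b a c.
have := tsym (Lp 2) (Lp 1) (Lp 0) c b a.
have := tcyc (Lp 2) (Lp 1) (Lp 0) c b a.
have := tsym (Lp 2) (Lp 1) (Lp 0) c a b.
have := tcyc (Lp 2) (Lp 1) (Lp 0) c a b.
have := tsym (Lp 2) (Lp 1) (Lp 0) a b c.
have := tcyc (Lp 2) (Lp 1) (Lp 0) a b c.
have := tsym (Lp 2) (Lp 1) (Lp 0) a c b.
have := tcyc (Lp 2) (Lp 1) (Lp 0) a c b.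
have := tsym (Lp 3) (Lp 0) (Lp 0) b c a.
have := tcyc (Lp 3) (Lp 0) (Lp 0) b c a.
have := tsym (Lp 3) (Lp 0) (Lp 0) b a c.
have := tcyc (Lp 3) (Lp 0) (Lp 0) b a c.
have := tsym (Lp 3) (Lp 0) (Lp 0) c b a.
have := tcyc (Lp 3) (Lp 0) (Lp 0) c b a.
have := tsym (Lp 3) (Lp 0) (Lp 0) c a b.
have := tcyc (Lp 3) (Lp 0) (Lp 0) c a b.
have := tsym (Lp 3) (Lp 0) (Lp 0) a b c.
have := tcyc (Lp 3) (Lp 0) (Lp 0) a b c.
have := tsym (Lp 3) (Lp 0) (Lp 0) a c b.
have := tcyc (Lp 3) (Lp 0) (Lp 0) a c b.
lra.
Qed.
End Main.

Lemma alg_main (T : 'I_n -> 'I_n -> 'I_n -> R) (L : 'M[R]_n) :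
  (forall a b c, T a b c = T b a c) -> (forall a b c, T a b c + T b c a + T c a b = 0) ->
  (forall b c a, alt3 (Psi T L 0) b c a = 0) -> (forall b c a, alt3 (Psi T L 1) b c a = 0) ->
  forall b c a, alt3 (Psi T L 2) b c a = 0.
Proof.
move=> Ts Tc h0 h1 b c a; rewrite keyE //.
have z0 P Q S : tr3 P Q S (alt3 (Psi T L 0)) b c a = 0 by apply: tr3_0.
have z1 P Q S : tr3 P Q S (alt3 (Psi T L 1)) b c a = 0 by apply: tr3_0.
rewrite !z0 !z1; lra.
Qed.

Lemma sum1M (G : 'I_n -> R) x : \sum_e (1%:M : 'M[R]_n) e x * G e = G x.
Proof. rewrite (bigD1 x) //= big1 ?addr0; first by rewrite mxE eqxx mul1r.
by move=> e /negbTE ex; rewrite mxE ex mul0r. Qed.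

Lemma tr3_P11 P F b c a : tr3 P 1%:M 1%:M F b c a = \sum_e P e b * F e c a.
Proof. apply: eq_bigr => e _.
transitivity (\sum_f 1%:M f c * (P e b * F e f a)); last by rewrite sum1M.
apply: eq_bigr => f _; rewrite -(sum1M (fun h => 1%:M f c * (P e b * F e f h)) a).
apply: eq_bigr => h _; ring. Qed.

Lemma tr3_11S S F b c a : tr3 1%:M 1%:M S F b c a = \sum_h S h a * F b c h.
Proof.
transitivity (\sum_e 1%:M e b * (\sum_h S h a * F e c h)); last by rewrite sum1M.
apply: eq_bigr => e _.
transitivity (\sum_f 1%:M f c * (1%:M e b * \sum_h S h a * F e f h)); last by rewrite sum1M.
apply: eq_bigr => f _; rewrite !mulr_sumr; apply: eq_bigr => h _; ring. Qed.

Lemma mat_assoc (A B : 'M[R]_n) (X : 'I_n -> R) a :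
  \sum_d A a d * (\sum_f B d f * X f) = \sum_f (A *m B) a f * X f.
Proof.
transitivity (\sum_d \sum_f A a d * B d f * X f).
  by apply: eq_bigr => d _; rewrite mulr_sumr; apply: eq_bigr => f _; rewrite mulrA.
rewrite exchange_big; apply: eq_bigr => f _; rewrite mxE mulr_suml; apply: eq_bigr => d _ //.
Qed.

Lemma sum1M' (G : 'I_n -> R) x : \sum_e (1%:M : 'M[R]_n) x e * G e = G x.
Proof. rewrite -[RHS](sum1M G x); apply: eq_bigr => e _; rewrite !mxE eq_sym //. Qed.

Definition nijA (Ku : 'I_n -> 'I_n -> R) (Cu : 'I_n -> 'I_n -> 'I_n -> R) a b c :=
  \sum_(d < n) Ku a d * (2^-1 * (Cu d b c - Cu d c b))
  + \sum_(d < n) 2^-1 * (Ku d b * Cu a c d - Ku d c * Cu a b d).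

Section Lower.
Variables (Gm Gi Km : 'M[R]_n).
Hypothesis GGi : Gm *m Gi = 1%:M.
Hypothesis KmGi : Km *m Gi = (Gi *m Km)^T.

Lemma lowerN T Ku Cu : (forall a b, Ku a b = (Gi *m Km) a b) ->
  (forall d b c, Cu d b c = \sum_e Gi d e * T e b c) ->
  forall a b c, \sum_d Gm a d * nijA Ku Cu d b c = Nl T (Gi *m Km) a b c.
Proof.
move=> hK hC a b c.
have GC x y : \sum_d Gm a d * Cu d x y = T a x y.
  under eq_bigr => d _ do rewrite hC.
  by rewrite mat_assoc GGi sum1M'.
have KC x y : \sum_f Km a f * Cu f x y = \sum_e (Gi *m Km) e a * T e x y.
  under eq_bigr => d _ do rewrite hC.
  rewrite mat_assoc KmGi; apply: eq_bigr => e _; by rewrite mxE.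
rewrite /nijA /Nl.
under eq_bigr => d _ do rewrite mulrDr.
rewrite big_split /= !mul1mx !tr3_P11 !tr3_11S.
have S1 : \sum_i Gm a i * \sum_d Ku i d * (2^-1 * (Cu d b c - Cu d c b)) =
   2^-1 * (\sum_e (Gi *m Km) e a * T e b c - \sum_e (Gi *m Km) e a * T e c b).
  under eq_bigr => i _ do under eq_bigr => d _ do rewrite hK.
  rewrite mat_assoc mulmxA GGi mul1mx -!KC mulrBr !mulr_sumr -sumrB.
  by apply: eq_bigr => f _; ring.
have S2 : \sum_i Gm a i * \sum_d 2^-1 * (Ku d b * Cu i c d - Ku d c * Cu i b d) =
   2^-1 * (\sum_h (Gi *m Km) h b * T a c h - \sum_h (Gi *m Km) h c * T a b h).
  transitivity (\sum_d 2^-1 * (Ku d b * (\sum_i Gm a i * Cu i c d) - Ku d c * (\sum_i Gm a i * Cu i b d))).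
    under eq_bigr => i _ do rewrite mulr_sumr.
    rewrite exchange_big; apply: eq_bigr => d _.
    rewrite !mulr_sumr -sumrB mulr_sumr; apply: eq_bigr => i _; ring.
  under eq_bigr => d _ do rewrite !GC !hK.
  by rewrite -mulr_sumr sumrB.
rewrite S1 S2; ring.
Qed.

Lemma psiB T Ku Cu j (X : 'I_n -> 'I_n -> R) : (forall a b, Ku a b = (Gi *m Km) a b) ->
  (forall d b c, Cu d b c = \sum_e Gi d e * T e b c) ->
  (forall a d, X a d = ((Lp (Gi *m Km) j)^T *m Gm) a d) ->
  forall b c a, \sum_d nijA Ku Cu d b c * X a d = Psi T (Gi *m Km) j b c a.
Proof.
move=> hK hC hX b c a.
rewrite /Psi /= tr3_11S.
under eq_bigr => d _ do rewrite hX mxE mulr_sumr.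
rewrite exchange_big; apply: eq_bigr => e _.
rewrite /Nlf -(lowerN hK hC) mulr_sumr; apply: eq_bigr => d _; rewrite mxE; ring.
Qed.
End Lower.
End Alg.

Lemma alt3_ext (R : realType) n (F G : 'I_n -> 'I_n -> 'I_n -> R) b c a :
  (forall b c a, F b c a = G b c a) -> alt3 F b c a = alt3 G b c a.
Proof. by move=> E; rewrite /alt3 !E. Qed.

Unset Implicit Arguments.

Theorem theorem1 (R : realType) (n : nat) (U : set 'rV[R]_n)
    (g K : 'rV[R]_n -> 'I_n -> 'I_n -> R) :
  open U ->
  (* g is a smooth pseudo-Riemannian metric on U (any signature) *)
  (forall i j, smooth_on U (fun x => g x i j)) ->
  (forall x, U x -> forall i j, g x i j = g x j i) ->
  (forall x, U x -> gmx g x \in unitmx) ->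
  (* K is a smooth symmetric second order tensor field satisfying the Killing equation *)
  (forall i j, smooth_on U (fun x => K x i j)) ->
  (forall x, U x -> forall i j, K x i j = K x j i) ->
  killing_on U g K ->
  (* first two Nijenhuis conditions *)
  (forall x, U x -> forall b c a, nij_cond g K (g x) x b c a = 0) ->
  (forall x, U x -> forall b c a, nij_cond g K (K x) x b c a = 0) ->
  (* third Nijenhuis condition *)
  forall x, U x -> forall b c a, nij_cond g K (Ksq g K x) x b c a = 0.
Proof.
move=> oU _ gsym gunit _ Ksym kill h1 h2 x Ux.
set Gm := gmx g x; set Gi := invmx Gm; set Km := gmx K x; set L := Gi *m Km.
set T := covK g K x.
have Gu : Gm \in unitmx by apply: gunit.
have GGi : Gm *m Gi = 1%:M by apply: mulmxV.
have GmT : Gm^T = Gm by apply/matrixP => i j; rewrite !mxE gsym.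
have KmT : Km^T = Km by apply/matrixP => i j; rewrite !mxE Ksym.
have GiT : Gi^T = Gi by rewrite trmx_inv GmT.
have LT : L^T = Km *m Gi by rewrite trmx_mul GiT KmT.
have KmGi : Km *m Gi = L^T by rewrite LT.
have hK : forall a b, Kup g K x a b = L a b.
  move=> a b; rewrite /Kup mxE; apply: eq_bigr => d _; by rewrite /ginv mxE.
have hC : forall d b c, covKup g K x d b c = \sum_e Gi d e * T e b c by [].
have nU : \forall y \near x, U y.
  by apply: open_nbhs_nbhs; split.
have Tsym : forall a b c, T a b c = T b a c.
  move=> a b c; rewrite /T /covK.
  have -> : partial (fun y => K y a b) c x = partial (fun y => K y b a) c x.
    rewrite /partial; apply: near_eq_derive; near=> y; apply: Ksym; near: y; exact: nU.
  congr (_ - _); apply: eq_bigr => d _; rewrite addrC (Ksym x Ux a d) (Ksym x Ux d b) //.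
have Tcyc : forall a b c, T a b c + T b c a + T c a b = 0.
  by move=> a b c; apply: (kill x Ux c a b).
have nijE : forall d b c, nijenhuis g K x d b c = nijA (Kup g K x) (covKup g K x) d b c by [].
have P0 : forall b c a, \sum_d nijenhuis g K x d b c * g x a d = Psi T L 0 b c a.
  move=> b c a; under eq_bigr => d _ do rewrite nijE.
  apply: (psiB GGi KmGi hK hC) => a' d; by rewrite /Lp /= trmx1 mul1mx mxE.
have P1 : forall b c a, \sum_d nijenhuis g K x d b c * K x a d = Psi T L 1 b c a.
  move=> b c a; under eq_bigr => d _ do rewrite nijE.
  apply: (psiB GGi KmGi hK hC) => a' d; rewrite /Lp /= mul1mx.
  by rewrite LT -mulmxA mulVmx // mulmx1 mxE.
have P2 : forall b c a, \sum_d nijenhuis g K x d b c * Ksq g K x a d = Psi T L 2 b c a.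
  move=> b c a; under eq_bigr => d _ do rewrite nijE.
  apply: (psiB GGi KmGi hK hC) => a' d; rewrite /Lp /= mul1mx trmx_mul LT -!mulmxA mulVmx // mulmx1.
  rewrite /Ksq mxE; apply: eq_bigr => e _; by rewrite hK /Km /gmx !mxE.
move=> b c a.
rewrite /nij_cond (alt3_ext _ _ _ P2).
apply: alg_main => //.
  by move=> b' c' a'; rewrite -(alt3_ext _ _ _ P0); apply: h1.
by move=> b' c' a'; rewrite -(alt3_ext _ _ _ P1); apply: h2.
Unshelve. all: by end_near.
Qed.
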